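(* Suppose that every connected finite simple graph $G$ of order $n\geq 5$ with non-singular adjacency matrix satisfies $\mathcal{E}(G)\geq n-1+\bar d$. Then every finite simple graph $G$ (connected or not) of order $n\geq 5$ with non-singular adjacency matrix satisfies $\mathcal{E}(G)\geq n-1+\bar d$.
   Context: For a finite simple graph $G$ with $n$ vertices and $m$ edges, $A(G)$ is its adjacency matrix with eigenvalues $\lambda_1\ge\cdots\ge\lambda_n$, and the energy is $\mathcal{E}(G)=\sum_{i=1}^n|\lambda_i|$. $\bar d=2m/n$ is the average degree. *)

(* Defs.v *)
From mathcomp Require Import all_boot all_order all_algebra all_field.
Set Implicit Arguments. Unset Strict Implicit. Unset Printing Implicit Defensive.
Import Order.TTheory GRing.Theory Num.Theory.
Local Open Scope ring_scope.

(* Scalars are algebraic complex numbers algC (an algebraically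
   closed field), so that the characteristic polynomial splits. *)
Definition simple_graph n (e : rel 'I_n) : Prop := symmetric e /\ irreflexive e.

Definition connected_graph n (e : rel 'I_n) : Prop := forall x y, connect e x y.

Definition adjmx n (e : rel 'I_n) : 'M[algC]_n := \matrix_(i, j) (e i j)%:R.

Definition nedges n (e : rel 'I_n) : nat :=
  #|[set p : 'I_n * 'I_n | e p.1 p.2 && (p.1 < p.2)%N]|.

Definition avgdeg n (e : rel 'I_n) : algC := (2 * nedges e)%:R / n%:R.

Definition eigenvalues n (A : 'M[algC]_n) : seq algC :=
  sval (closed_field_poly_normal (char_poly A)).

Definition energy n (e : rel 'I_n) : algC :=
  \sum_(z <- eigenvalues (adjmx e)) `|z|.

(* Main.v *)
Require Import Defs.
From mathcomp Require Import all_boot all_order all_algebra all_field.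
From mathcomp Require Import fingroup perm ring lra zify.
Set Implicit Arguments. Unset Strict Implicit. Unset Printing Implicit Defensive.
Import Order.TTheory GRing.Theory Num.Theory.
Local Open Scope ring_scope.

Definition eigs (p : {poly algC}) : seq algC := sval (closed_field_poly_normal p).

Lemma eigs_monic p : p \is monic -> p = \prod_(z <- eigs p) ('X - z%:P).
Proof.
move=> /monicP h; rewrite /eigs; case: (closed_field_poly_normal p) => r /= hr.
by rewrite {1}hr h scale1r.
Qed.

Lemma eigs_prod (s : seq algC) : perm_eq (eigs (\prod_(z <- s) ('X - z%:P))) s.
Proof.
apply: prod_XsubC_eq; rewrite -eigs_monic //; exact: monic_prod_XsubC.
Qed.

Lemma energyE n (e : rel 'I_n) :
  energy e = \sum_(z <- eigs (char_poly (adjmx e))) `|z|.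
Proof. by []. Qed.

Lemma Esum_prod (s : seq algC) :
  \sum_(z <- eigs (\prod_(z <- s) ('X - z%:P))) `|z| = \sum_(z <- s) `|z|.
Proof. exact/perm_big/eigs_prod. Qed.

Lemma Esum_mul (p q : {poly algC}) : p \is monic -> q \is monic ->
  \sum_(z <- eigs (p * q)) `|z| =
  \sum_(z <- eigs p) `|z| + \sum_(z <- eigs q) `|z|.
Proof.
move=> mp mq; rewrite {1}(eigs_monic mp) {1}(eigs_monic mq) -big_cat Esum_prod.
by rewrite big_cat.
Qed.

Lemma char_poly_conj n (P Q A : 'M[algC]_n) : P *m Q = 1%:M ->
  char_poly (P *m A *m Q) = char_poly A.
Proof.
move=> PQ; rewrite /char_poly /char_poly_mx.
have -> : 'X%:M - map_mx polyC (P *m A *m Q) =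
   map_mx polyC P *m ('X%:M - map_mx polyC A) *m map_mx polyC Q.
  rewrite !map_mxM mulmxBr mulmxBl; congr (_ - _).
  by rewrite scalar_mxC -mulmxA -map_mxM PQ map_mx1 mulmx1.
by rewrite !det_mulmx mulrAC -det_mulmx -map_mxM PQ map_mx1 det1 mul1r.
Qed.

Lemma adj_eig_real n (e : rel 'I_n) : symmetric e ->
  forall z, root (char_poly (adjmx e)) z -> z \is Creal.
Proof.
move=> sym z; rewrite -eigenvalue_root_char => /eigenvalueP [v vA nz].
have hj : forall j, \sum_i v 0 i * adjmx e i j = z * v 0 j.
  by move=> j; have := congr1 (fun M : 'M[algC]_(1, n) => M 0 j) vA; rewrite !mxE.
pose s := \sum_j \sum_i v 0 i * adjmx e i j * (v 0 j)^*.
pose q := \sum_j v 0 j * (v 0 j)^*.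
have sq : s = z * q.
  rewrite /s /q mulr_sumr; apply: eq_bigr => j _.
  by rewrite -mulr_suml hj mulrA.
have sreal : s \is Creal.
  rewrite CrealE; apply/eqP; rewrite /s rmorph_sum exchange_big /=.
  apply: eq_bigr => i _; rewrite rmorph_sum; apply: eq_bigr => j _.
  rewrite !rmorphM /= conjCK !mxE (sym i j).
  rewrite (_ : ((e j i)%:R)^* = (e j i)%:R :> algC); last by rewrite rmorph_nat.
  by ring.
have q_ge0 : 0 <= q.
  by apply: sumr_ge0 => j _; rewrite -normCK exprn_ge0.
have q_neq0 : q != 0.
  apply: contra nz; rewrite psumr_eq0; last by move=> j _; rewrite -normCK exprn_ge0.
  move=> /allP h; apply/eqP/rowP => j; rewrite mxE.
  have := h j (mem_index_enum j); rewrite /= -normCK sqrf_eq0 normr_eq0.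
  by move/eqP.
have qR : q \is Creal by apply: ger0_real.
have -> : z = s / q by rewrite sq mulfK.
by apply: rpredM => //; rewrite rpredV.
Qed.

Definition oe n (e : rel 'I_n) : nat := (\sum_(i < n) \sum_(j < n) e i j)%N.

Lemma handshake n (e : rel 'I_n) : simple_graph e -> (2 * nedges e)%N = oe e.
Proof.
move=> [sym irr].
have h1 : nedges e = (\sum_(i < n) \sum_(j < n) (e i j && (i < j)%N))%N.
  rewrite /nedges -sum1_card pair_big /= big_mkcond /=.
  by apply: eq_bigr => p _; rewrite inE; case: (_ && _).
have h2 : oe e = (\sum_(i < n) \sum_(j < n) (e i j && (i < j)%N) +
                  \sum_(i < n) \sum_(j < n) (e i j && (j < i)%N))%N.
  rewrite /oe -big_split /=; apply: eq_bigr => i _.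
  rewrite -big_split /=; apply: eq_bigr => j _.
  case: (ltngtP i j) => hij; rewrite ?andbT ?andbF ?addn0 ?add0n //.
  have -> : j = i by apply: val_inj.
  by rewrite irr.
rewrite h2 h1 mul2n -addnn; congr (_ + _)%N.
rewrite exchange_big /=; apply: eq_bigr => i _; apply: eq_bigr => j _.
by rewrite sym.
Qed.

Lemma no_isolated n (e : rel 'I_n) : \det (adjmx e) != 0 ->
  forall i, exists j, e i j.
Proof.
move=> hd i; apply/existsP; apply: contraR hd => /existsPn h.
rewrite (expand_det_row _ i) big1 // => j _.
by rewrite mxE (negbTE (h j)) mul0r.
Qed.

Lemma n_le_oe n (e : rel 'I_n) : \det (adjmx e) != 0 -> (n <= oe e)%N.
Proof.
move=> hd; rewrite /oe -[X in (X <= _)%N]card_ord -sum1_card.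
apply: leq_sum => i _; have [j hj] := no_isolated hd i.
by rewrite (bigD1 j) //= hj.
Qed.


Lemma relabel N n (h : 'I_N -> 'I_n) (e : rel 'I_n) : N = n -> injective h ->
  [/\ char_poly (adjmx (fun i j => e (h i) (h j))) = char_poly (adjmx e),
   \det (adjmx (fun i j => e (h i) (h j))) = \det (adjmx e) &
  oe (fun i j => e (h i) (h j)) = oe e].
Proof.
move=> eNn; subst N => hinj; pose s := perm hinj.
have hs : forall i, h i = s i by move=> i; rewrite permE.
have PQ : perm_mx s *m perm_mx s^-1 = 1%:M :> 'M[algC]_n.
  by rewrite -perm_mxM mulgV perm_mx1.
have hA : adjmx (fun i j => e (h i) (h j)) =
            perm_mx s *m adjmx e *m perm_mx s^-1.
  rewrite -mulmxA -col_permE -row_permE; apply/matrixP => i j.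
  by rewrite !mxE -!hs.
split.
- by rewrite hA; apply: char_poly_conj.
- by rewrite hA !det_mulmx mulrAC -det_mulmx PQ det1 mul1r.
rewrite /oe [RHS](reindex_inj hinj) /=; apply: eq_bigr => i _.
by rewrite [RHS](reindex_inj hinj).
Qed.

Lemma block_adj n1 n2 (e : rel 'I_(n1 + n2)) (e1 : rel 'I_n1) (e2 : rel 'I_n2) :
  (forall a b, e (lshift n2 a) (lshift n2 b) = e1 a b) ->
  (forall a b, e (rshift n1 a) (rshift n1 b) = e2 a b) ->
  (forall a b, e (lshift n2 a) (rshift n1 b) = false) ->
  (forall a b, e (rshift n1 a) (lshift n2 b) = false) ->
  adjmx e = block_mx (adjmx e1) 0 0 (adjmx e2).
Proof.
move=> h11 h22 h12 h21; apply/matrixP => i j.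
rewrite -(splitK i) -(splitK j).
case: (split i) => a; case: (split j) => b /=;
  rewrite ?block_mxEul ?block_mxEur ?block_mxEdl ?block_mxEdr !mxE ?h11 ?h22 ?h12 ?h21 //.
Qed.

Lemma block_props n1 n2 (e : rel 'I_(n1 + n2)) (e1 : rel 'I_n1) (e2 : rel 'I_n2) :
  (forall a b, e (lshift n2 a) (lshift n2 b) = e1 a b) ->
  (forall a b, e (rshift n1 a) (rshift n1 b) = e2 a b) ->
  (forall a b, e (lshift n2 a) (rshift n1 b) = false) ->
  (forall a b, e (rshift n1 a) (lshift n2 b) = false) ->
  [/\ char_poly (adjmx e) = char_poly (adjmx e1) * char_poly (adjmx e2),
      \det (adjmx e) = \det (adjmx e1) * \det (adjmx e2) &
      oe e = (oe e1 + oe e2)%N].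
Proof.
move=> h11 h22 h12 h21; have hb := block_adj h11 h22 h12 h21.
split.
- by rewrite /char_poly hb char_block_diag_mx det_ublock.
- by rewrite hb det_ublock.
rewrite /oe big_split_ord /=; congr (_ + _)%N.
  apply: eq_bigr => a _; rewrite big_split_ord /=.
  have -> : (\sum_(b < n2) e (lshift n2 a) (rshift n1 b))%N = 0%N.
    by rewrite big1 // => b _; rewrite h12.
  by rewrite addn0; apply: eq_bigr => b _; rewrite h11.
apply: eq_bigr => a _; rewrite big_split_ord /=.
have -> : (\sum_(b < n1) e (rshift n1 a) (lshift n2 b))%N = 0%N.
  by rewrite big1 // => b _; rewrite h21.
by rewrite add0n; apply: eq_bigr => b _; rewrite h22.
Qed.

Lemma split_graph n (e : rel 'I_n) x y : simple_graph e -> ~~ connect e x y ->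
  exists n1 n2 (e1 : rel 'I_n1) (e2 : rel 'I_n2),
   [/\ (n1 + n2 = n)%N, (0 < n1)%N, (0 < n2)%N, simple_graph e1 & simple_graph e2] /\
   [/\ char_poly (adjmx e) = char_poly (adjmx e1) * char_poly (adjmx e2),
      \det (adjmx e) = \det (adjmx e1) * \det (adjmx e2) &
      oe e = (oe e1 + oe e2)%N].
Proof.
move=> [sym irr] nxy.
pose S : {set 'I_n} := [set z | connect e x z].
pose f1 : 'I_#|S| -> 'I_n := enum_val.
pose f2 : 'I_#|~: S| -> 'I_n := enum_val.
have f1S a : f1 a \in S by exact: enum_valP.
have f2S b : f2 b \in ~: S by exact: enum_valP.
have cross a b : e (f1 a) (f2 b) = false.
  apply/negP => hab; move: (f2S b); rewrite !inE => /negP H; apply: H.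
  apply: connect_trans (connect1 hab); by move: (f1S a); rewrite inE.
pose h (i : 'I_(#|S| + #|~: S|)) : 'I_n :=
  match split i with inl a => f1 a | inr b => f2 b end.
have hl a : h (lshift _ a) = f1 a by rewrite /h (unsplitK (inl a)).
have hr b : h (rshift _ b) = f2 b by rewrite /h (unsplitK (inr b)).
have hinj : injective h.
  move=> i j; rewrite -(splitK i) -(splitK j).
  case: (split i) => a; case: (split j) => b /=;
    rewrite ?hl ?hr => hab.
  - by rewrite (enum_val_inj hab).
  - by move: (f2S b); rewrite -hab in_setC (f1S a).
  - by move: (f2S a); rewrite hab in_setC (f1S b).
  - by rewrite (enum_val_inj hab).
have hN : (#|S| + #|~: S| = n)%N by rewrite cardsC card_ord.
have [hc hd ho] := relabel e hN hinj.
pose e1 := fun a b => e (f1 a) (f1 b).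
pose e2 := fun a b => e (f2 a) (f2 b).
have b11 a b : e (h (lshift _ a)) (h (lshift _ b)) = e1 a b by rewrite !hl.
have b22 a b : e (h (rshift _ a)) (h (rshift _ b)) = e2 a b by rewrite !hr.
have b12 a b : e (h (lshift _ a)) (h (rshift _ b)) = false by rewrite hl hr cross.
have b21 a b : e (h (rshift _ a)) (h (lshift _ b)) = false by rewrite hl hr sym cross.
have [bc bd bo] := @block_props _ _ (fun i j => e (h i) (h j)) e1 e2 b11 b22 b12 b21.
exists #|S|, #|~: S|, e1, e2; split; split.
- exact: hN.
- apply/card_gt0P; exists x; rewrite /S in_set; exact: connect0.
- apply/card_gt0P; exists y; rewrite /S in_setC in_set; exact: nxy.
- split=> [a b|a]; rewrite /e1; [exact: sym | exact: irr].
- split=> [a b|a]; rewrite /e2; [exact: sym | exact: irr].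
- rewrite -hc; exact: bc.
- rewrite -hd; exact: bd.
- rewrite -ho; exact: bo.
Qed.


Section RealLemmas.
Variable R : realFieldType.
Implicit Types a b c d m t D r x : R.

Lemma core22 a b c d m : a + b + c + d = 0 ->
  a^+2 + b^+2 + c^+2 + d^+2 = 2 * m -> 0 < a * b -> 0 < c * d ->
  a * b * c * d = 1 -> 2 <= m -> m <= 14 ->
  (10 + m) / 3 <= `|a| + `|b| + `|c| + `|d|.
Proof.
move=> h1 h2 hab hcd h4 hm1 hm2.
have hP : 2 <= a * b + c * d.
  have hxy : (a * b) * (c * d) = 1 by rewrite -h4; ring.
  move: hab hcd hxy; set x := a * b; set y := c * d => hx hy hxy.
  have hs := sqr_ge0 (x - y); rewrite expr2 in hs.
  have : 4 <= (x + y) * (x + y) by nra.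
  nra.
have hcd' : c + d = - (a + b) by lra.
have e1 : `|a + b| <= `|a| + `|b| by apply: ler_normD.
have e2 : `|c + d| <= `|c| + `|d| by apply: ler_normD.
rewrite hcd' normrN in e2.
set u := `|a + b| in e1 e2.
have u0 : 0 <= u by apply: normr_ge0.
have u2 : u ^+ 2 = (a + b) ^+ 2 by rewrite /u real_normK ?num_real.
have hu : m + 2 <= u ^+ 2.
  rewrite u2; have : (a + b) ^+ 2 + (c + d) ^+ 2 = 2 * m + 2 * (a * b + c * d).
    by rewrite -h2; ring.
  rewrite hcd' sqrrN; lra.
have hq : ((10 + m) / 6) ^+ 2 <= m + 2.
  have : ((10 + m) / 6) ^+ 2 = (100 + 20 * m + m * m) / 36 by field.
  move=> ->; nra.
have : (10 + m) / 6 <= u.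
  have hc : 0 <= (10 + m) / 6 by lra.
  rewrite -(@ler_pXn2r _ 2) ?nnegrE //; lra.
lra.
Qed.


Lemma root31 r : r ^+ 4 - 6 * r ^+ 2 - 8 * r - 3 = 0 -> (r + 3) / 2 <= `|r|.
Proof.
move=> h; have : (r - 3) * (r + 1) ^+ 3 = 0 by rewrite -h; ring.
move/eqP; rewrite mulf_eq0 expf_eq0 /= subr_eq0 addr_eq0 => /orP [] /eqP ->.
  have -> : `|3 : R| = 3 by apply: ger0_norm; lra.
  lra.
have -> : `|-1 : R| = 1 by rewrite normrN normr1.
lra.
Qed.

Lemma L4 (r1 r2 r3 r4 : R) m t D :
  (forall x, (x - r1) * (x - r2) * (x - r3) * (x - r4) =
              x ^+ 4 - m * x ^+ 2 - 2 * t * x + D) ->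
  (D = 1 /\ 2 <= m /\ m <= 14) \/ (m = 6 /\ t = 4 /\ D = -3) ->
  (10 + m) / 3 <= `|r1| + `|r2| + `|r3| + `|r4|.
Proof.
move=> H hc.
have H0 := H 0; have H1 := H 1; have Hm := H (-1); have H2 := H 2.
have e1 : r1 + r2 + r3 + r4 = 0 by lra.
have e2 : r1 * r2 + r1 * r3 + r1 * r4 + r2 * r3 + r2 * r4 + r3 * r4 = - m by lra.
have e4 : r1 * r2 * r3 * r4 = D by lra.
have s2 : r1 ^+ 2 + r2 ^+ 2 + r3 ^+ 2 + r4 ^+ 2 = 2 * m.
  have h : (r1 + r2 + r3 + r4) * (r1 + r2 + r3 + r4) = 0 by rewrite e1 mul0r.
  rewrite !expr2; lra.
case: hc => [[hD [hm1 hm2]] | [hm [ht hD]]]; last first.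
  have hr r : r \in [:: r1; r2; r3; r4] -> (r + 3) / 2 <= `|r|.
    move=> hr; apply: root31; have := H r.
    have -> : (r - r1) * (r - r2) * (r - r3) * (r - r4) = 0.
      by move: hr; rewrite !inE => /or4P [] /eqP ->; rewrite !subrr ?mulr0 ?mul0r.
    rewrite hm ht hD => h0.
    have h1 : r ^+ 4 - 6 * r ^+ 2 - 2 * 4 * r + -3 = 0 by rewrite h0.
    by rewrite -h1; ring.
  have := hr r1; have := hr r2; have := hr r3; have := hr r4.
  rewrite !inE !eqxx ?orbT => /(_ isT) a4 /(_ isT) a3 /(_ isT) a2 /(_ isT) a1.
  rewrite hm; lra.
rewrite hD in e4.
have nz : r1 * r2 != 0.
  by apply/eqP => h0; move: e4; rewrite h0 !mul0r => /eqP; rewrite eq_sym oner_eq0.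
case: (ltrgt0P (r1 * r2)) nz => // h12 _.
  have h34 : 0 < r3 * r4.
    rewrite -(pmulr_rgt0 _ h12) (_ : r1 * r2 * (r3 * r4) = 1) ?ltr01 //.
    by rewrite -e4; ring.
  by apply: (core22 e1 s2) => //; rewrite -e4; ring.
have nz : r1 * r3 != 0.
  by apply/eqP => h0; move: e4; rewrite (_ : r1 * r2 * r3 * r4 = (r1 * r3) * (r2 * r4)); [rewrite h0 !mul0r => /eqP; rewrite eq_sym oner_eq0 | ring].
case: (ltrgt0P (r1 * r3)) nz => // h13 _.
  have h24 : 0 < r2 * r4.
    rewrite -(pmulr_rgt0 _ h13) (_ : r1 * r3 * (r2 * r4) = 1) ?ltr01 //.
    by rewrite -e4; ring.
  have := @core22 r1 r3 r2 r4 m.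
  rewrite (_ : r1 + r3 + r2 + r4 = 0); last by lra.
  rewrite (_ : r1 ^+ 2 + r3 ^+ 2 + r2 ^+ 2 + r4 ^+ 2 = 2 * m); last by rewrite -s2; ring.
  rewrite (_ : r1 * r3 * r2 * r4 = 1); last by rewrite -e4; ring.
  move=> /(_ erefl erefl h13 h24 erefl hm1 hm2); lra.
have h23 : 0 < r2 * r3.
  have : 0 < (r1 * r2) * (r1 * r3) by rewrite nmulr_rgt0.
  rewrite (_ : r1 * r2 * (r1 * r3) = (r1 * r1) * (r2 * r3)); last by ring.
  have : 0 < r1 * r1.
    have : r1 != 0 by apply: contraTneq h12 => ->; rewrite mul0r ltxx.
    by move=> h; rewrite -expr2 exprn_even_gt0.
  by move=> h; rewrite (pmulr_rgt0 _ h).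
have h14 : 0 < r1 * r4.
  rewrite -(pmulr_rgt0 _ h23) (_ : r2 * r3 * (r1 * r4) = 1) ?ltr01 //.
  by rewrite -e4; ring.
have := @core22 r1 r4 r2 r3 m.
rewrite (_ : r1 + r4 + r2 + r3 = 0); last by lra.
rewrite (_ : r1 ^+ 2 + r4 ^+ 2 + r2 ^+ 2 + r3 ^+ 2 = 2 * m); last by rewrite -s2; ring.
rewrite (_ : r1 * r4 * r2 * r3 = 1); last by rewrite -e4; ring.
move=> /(_ erefl erefl h14 h23 erefl hm1 hm2); lra.
Qed.


Lemma root21 r : r ^+ 3 - 3 * r - 2 = 0 -> (r + 4) / 3 <= `|r|.
Proof.
move=> h; have : (r - 2) * (r + 1) ^+ 2 = 0 by rewrite -h; ring.
move/eqP; rewrite mulf_eq0 expf_eq0 /= subr_eq0 addr_eq0 => /orP [] /eqP ->.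
  have -> : `|2 : R| = 2 by apply: ger0_norm; lra.
  lra.
have -> : `|-1 : R| = 1 by rewrite normrN normr1.
lra.
Qed.

Lemma L3 (r1 r2 r3 : R) :
  (forall x, (x - r1) * (x - r2) * (x - r3) = x ^+ 3 - 3 * x - 2) ->
  11 / 3 <= `|r1| + `|r2| + `|r3|.
Proof.
move=> H.
have H0 := H 0; have H1 := H 1; have Hm := H (-1).
have e1 : r1 + r2 + r3 = 0 by lra.
have hr r : r \in [:: r1; r2; r3] -> (r + 4) / 3 <= `|r|.
  move=> hr; apply: root21; have := H r.
  have -> : (r - r1) * (r - r2) * (r - r3) = 0.
    by move: hr; rewrite !inE => /or3P [] /eqP ->; rewrite !subrr ?mulr0 ?mul0r.
  by move=> h0; rewrite -h0.
have := hr r1; have := hr r2; have := hr r3.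
rewrite !inE !eqxx ?orbT => /(_ isT) a3 /(_ isT) a2 /(_ isT) a1.
lra.
Qed.

Lemma L2 (r1 r2 : R) :
  (forall x, (x - r1) * (x - r2) = x ^+ 2 - 1) ->
  2 <= `|r1| + `|r2|.
Proof.
move=> H.
have hr r : r \in [:: r1; r2] -> 1 <= `|r|.
  move=> hr; have := H r.
  have -> : (r - r1) * (r - r2) = 0.
    by move: hr; rewrite !inE => /orP [] /eqP ->; rewrite !subrr ?mulr0 ?mul0r.
  move=> h0; have : (r - 1) * (r + 1) = 0 by rewrite [RHS]h0; ring.
  move/eqP; rewrite mulf_eq0 subr_eq0 addr_eq0 => /orP [] /eqP ->.
    by rewrite normr1.
  by rewrite normrN normr1.
have := hr r1; have := hr r2.
rewrite !inE !eqxx ?orbT => /(_ isT) a2 /(_ isT) a1.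
lra.
Qed.

End RealLemmas.

Definition InvB (R : realFieldType) (n m : nat) (E : R) : Prop :=
  if (5 <= n)%N then (n.-1)%:R + m%:R / n%:R <= E
  else (n.-1)%:R + m%:R / n%:R - (m%:R / n%:R - 1) / 3 <= E.

Section Union.
Variable R : realFieldType.

Lemma union_core (N1 N2 x1 x2 c1 c2 E1 E2 : R) : 0 < N1 -> 0 < N2 ->
  1 <= x1 -> 1 <= x2 -> c1 <= N2 / (N1 + N2) -> c2 <= N1 / (N1 + N2) ->
  N1 - 1 + x1 - c1 * (x1 - 1) <= E1 -> N2 - 1 + x2 - c2 * (x2 - 1) <= E2 ->
  (N1 + N2) - 1 + (x1 * N1 + x2 * N2) / (N1 + N2) <= E1 + E2.
Proof.
move=> hN1 hN2 hx1 hx2 hc1 hc2 h1 h2.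
have hN : N1 + N2 != 0 by apply/lt0r_neq0; lra.
set w := N1 / (N1 + N2) in hc2 *.
have hw : N2 / (N1 + N2) = 1 - w by rewrite /w; field.
have hy : (x1 * N1 + x2 * N2) / (N1 + N2) = x1 * w + x2 * (1 - w) by rewrite /w; field.
rewrite hw in hc1; rewrite hy.
have p1 : 0 <= (x1 - 1) * (1 - w - c1) by apply: mulr_ge0; lra.
have p2 : 0 <= (x2 - 1) * (w - c2) by apply: mulr_ge0; lra.
nra.
Qed.

Lemma union_inv (n1 n2 m1 m2 : nat) (E1 E2 : R) :
  (2 <= n1)%N -> (2 <= n2)%N -> (n1 <= m1)%N -> (n2 <= m2)%N ->
  InvB n1 m1 E1 -> InvB n2 m2 E2 -> InvB (n1 + n2) (m1 + m2) (E1 + E2).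
Proof.
move=> hn1 hn2 hm1 hm2 hI1 hI2.
have pre (n m : nat) (E : R) : (2 <= n)%N -> (n <= m)%N -> InvB n m E ->
  exists x c, [/\ 1 <= x, m%:R = x * n%:R, (n.-1)%:R = n%:R - 1 :> R,
     n%:R - 1 + x - c * (x - 1) <= E &
     (c = 0 \/ (c = 1 / 3 /\ (n <= 4)%N))].
  move=> hn hm hI.
  have Np : 0 < n%:R :> R by rewrite ltr0n; lia.
  have Nm1 : (n.-1)%:R = n%:R - 1 :> R.
    have hp : (0 < n)%N by lia.
    by rewrite -{2}(prednK hp) -natr1 addrK.
  have hx : 1 <= m%:R / n%:R :> R by rewrite ler_pdivlMr // mul1r ler_nat.
  have hmx : m%:R = m%:R / n%:R * n%:R :> R by rewrite divfK // lt0r_neq0.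
  move: hI; rewrite /InvB Nm1; case: ifP => h5 hI.
    exists (m%:R / n%:R), 0; split => //; first by lra.
    by left.
  exists (m%:R / n%:R), (1 / 3); split => //; first by lra.
  by right; split => //; lia.
have [x1 [c1 [hx1 hmx1 hN1 hE1 hc1]]] := pre _ _ _ hn1 hm1 hI1.
have [x2 [c2 [hx2 hmx2 hN2 hE2 hc2]]] := pre _ _ _ hn2 hm2 hI2.
have N1p : 0 < n1%:R :> R by rewrite ltr0n; lia.
have N2p : 0 < n2%:R :> R by rewrite ltr0n; lia.
have hN : ((n1 + n2).-1)%:R = (n1 + n2)%:R - 1 :> R.
  have hp : (0 < n1 + n2)%N by lia.
  by rewrite -{2}(prednK hp) -natr1 addrK.
rewrite /InvB hN natrD natrD hmx1 hmx2; case: ifP => h5.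
  apply: (union_core N1p N2p hx1 hx2 _ _ hE1 hE2).
    case: hc1 => [->|[-> h4]]; first by apply: divr_ge0; apply: ltW; lra.
    have : (n1 <= 2 * n2)%N by lia.
    rewrite -(ler_nat R) natrM => h.
    rewrite ler_pdivlMr; lra.
  case: hc2 => [->|[-> h4]]; first by apply: divr_ge0; apply: ltW; lra.
  have : (n2 <= 2 * n1)%N by lia.
  rewrite -(ler_nat R) natrM => h.
  rewrite ler_pdivlMr; lra.
have e1 : n1 = 2%N by lia.
have e2 : n2 = 2%N by lia.
move: hE1 hE2; rewrite e1 e2 => hE1 hE2.
have -> : (x1 * 2%:R + x2 * 2%:R) / (2%:R + 2%:R) = (x1 + x2) / 2 :> R.
  by field.
case: hc1 hE1 => [[->]|[-> _]] hE1; case: hc2 hE2 => [[->]|[-> _]] hE2; lra.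
Qed.
End Union.


Lemma det_expF (R : comNzRingType) k (F : nat -> nat -> R) :
  \det (\matrix_(i < k.+1, j < k.+1) F i j) =
  \sum_(j < k.+1) F 0%N j * ((-1) ^+ j * \det (\matrix_(i < k, l < k) F i.+1 (bump j l))).
Proof.
rewrite (expand_det_row _ ord0); apply: eq_bigr => j _.
rewrite /cofactor mxE add0n; congr (_ * (_ * \det _)).
by apply/matrixP => i l; rewrite !mxE.
Qed.
Lemma det1F (R : comNzRingType) (F : nat -> nat -> R) :
  \det (\matrix_(i < 1, j < 1) F i j) = F 0%N 0%N.
Proof. by rewrite det_mx11 mxE. Qed.
Lemma det2F (R : comNzRingType) (F : nat -> nat -> R) :
  \det (\matrix_(i < 2, j < 2) F i j) = F 0%N 0%N * F 1%N 1%N - F 0%N 1%N * F 1%N 0%N.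
Proof.
rewrite det_expF !big_ord_recr big_ord0 /=.
rewrite (det1F (fun a b => F a.+1 (bump 0 b))) (det1F (fun a b => F a.+1 (bump 1 b))).
rewrite /bump /=; ring.
Qed.
Lemma det3F (R : comNzRingType) (F : nat -> nat -> R) :
  \det (\matrix_(i < 3, j < 3) F i j) =
  F 0%N 0%N * (F 1%N 1%N * F 2%N 2%N - F 1%N 2%N * F 2%N 1%N)
  - F 0%N 1%N * (F 1%N 0%N * F 2%N 2%N - F 1%N 2%N * F 2%N 0%N)
  + F 0%N 2%N * (F 1%N 0%N * F 2%N 1%N - F 1%N 1%N * F 2%N 0%N).
Proof.
rewrite det_expF !big_ord_recr big_ord0 /=.
rewrite (det2F (fun a b => F a.+1 (bump 0 b))) (det2F (fun a b => F a.+1 (bump 1 b))).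
rewrite (det2F (fun a b => F a.+1 (bump 2 b))).
rewrite /bump /=; ring.
Qed.

Lemma horner_char n (A : 'M[algC]_n) x :
  (char_poly A).[x] = \det (x%:M - A).
Proof.
rewrite /char_poly -horner_evalE -det_map_mx; congr (\det _).
apply/matrixP => i j; rewrite !mxE /=.
by rewrite /horner_eval hornerD hornerN hornerMn hornerX hornerC.
Qed.

Lemma det_G k (e : rel 'I_k.+1) x :
  \det (x%:M - adjmx e) =
  \det (\matrix_(i < k.+1, j < k.+1) (x *+ (i == j :> nat) - (e (inord i) (inord j))%:R)).
Proof.
congr (\det _); apply/matrixP => i j; rewrite !mxE !inord_val.
by [].
Qed.

Definition bR (R : nzRingType) (b : bool) : R := (b : nat)%:R.

Lemma cp4 (e : rel 'I_4) x : symmetric e -> irreflexive e ->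
  let b01 := bR algC (e (inord 0) (inord 1)) in
  let b02 := bR algC (e (inord 0) (inord 2)) in
  let b03 := bR algC (e (inord 0) (inord 3)) in
  let b12 := bR algC (e (inord 1) (inord 2)) in
  let b13 := bR algC (e (inord 1) (inord 3)) in
  let b23 := bR algC (e (inord 2) (inord 3)) in
  \det (x%:M - adjmx e) =
  x ^+ 4 - (b01 ^+ 2 + b02 ^+ 2 + b03 ^+ 2 + b12 ^+ 2 + b13 ^+ 2 + b23 ^+ 2) * x ^+ 2
  - 2 * (b01 * b02 * b12 + b01 * b03 * b13 + b02 * b03 * b23 + b12 * b13 * b23) * x
  + ((b01 * b23) ^+ 2 + (b02 * b13) ^+ 2 + (b03 * b12) ^+ 2
     - 2 * (b01 * b23 * (b02 * b13) + b01 * b23 * (b03 * b12) + b02 * b13 * (b03 * b12))).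
Proof.
move=> sym irr /=; rewrite det_G.
pose F := fun (a b : nat) => x *+ (a == b) - (e (inord a) (inord b))%:R.
rewrite (@det_expF _ 3 F) !big_ord_recr big_ord0 /=.
rewrite (det3F (fun a b => F a.+1 (bump 0 b))) (det3F (fun a b => F a.+1 (bump 1 b))).
rewrite (det3F (fun a b => F a.+1 (bump 2 b))) (det3F (fun a b => F a.+1 (bump 3 b))).
rewrite /F /bump /bR /= ?mulr0n ?mulr1n ?(addSn, add0n).
rewrite (sym (inord 1) (inord 0)) (sym (inord 2) (inord 0)) (sym (inord 3) (inord 0)).
rewrite (sym (inord 2) (inord 1)) (sym (inord 3) (inord 1)) (sym (inord 3) (inord 2)).
rewrite !irr /=.
set b01 := ((e (inord 0) (inord 1)) : nat)%:R.
set b02 := ((e (inord 0) (inord 2)) : nat)%:R.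
set b03 := ((e (inord 0) (inord 3)) : nat)%:R.
set b12 := ((e (inord 1) (inord 2)) : nat)%:R.
set b13 := ((e (inord 1) (inord 3)) : nat)%:R.
set b23 := ((e (inord 2) (inord 3)) : nat)%:R.
ring.
Qed.

Lemma cp3 (e : rel 'I_3) x : symmetric e -> irreflexive e ->
  let b01 := bR algC (e (inord 0) (inord 1)) in
  let b02 := bR algC (e (inord 0) (inord 2)) in
  let b12 := bR algC (e (inord 1) (inord 2)) in
  \det (x%:M - adjmx e) =
  x ^+ 3 - (b01 ^+ 2 + b02 ^+ 2 + b12 ^+ 2) * x - 2 * (b01 * b02 * b12).
Proof.
move=> sym irr /=; rewrite det_G.
pose F := fun (a b : nat) => x *+ (a == b) - (e (inord a) (inord b))%:R.
rewrite (det3F F).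
rewrite /F /bR /= ?mulr0n ?mulr1n ?(addSn, add0n).
rewrite (sym (inord 1) (inord 0)) (sym (inord 2) (inord 0)) (sym (inord 2) (inord 1)).
rewrite !irr /=.
set b01 := ((e (inord 0) (inord 1)) : nat)%:R.
set b02 := ((e (inord 0) (inord 2)) : nat)%:R.
set b12 := ((e (inord 1) (inord 2)) : nat)%:R.
ring.
Qed.

Lemma cp2 (e : rel 'I_2) x : symmetric e -> irreflexive e ->
  let b01 := bR algC (e (inord 0) (inord 1)) in
  \det (x%:M - adjmx e) = x ^+ 2 - b01 ^+ 2.
Proof.
move=> sym irr /=; rewrite det_G.
pose F := fun (a b : nat) => x *+ (a == b) - (e (inord a) (inord b))%:R.
rewrite (det2F F).
rewrite /F /bR /= ?mulr0n ?mulr1n ?(addSn, add0n).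
rewrite (sym (inord 1) (inord 0)) !irr /=.
set b01 := ((e (inord 0) (inord 1)) : nat)%:R.
ring.
Qed.


Lemma L4' (R : realFieldType) (r1 r2 r3 r4 m t D M' : R) :
  (forall x, (x - r1) * (x - r2) * (x - r3) * (x - r4) =
              x ^+ 4 - m * x ^+ 2 - 2 * t * x + D) ->
  (D = 1 /\ 2 <= m /\ m <= 14) \/ (m = 6 /\ t = 4 /\ D = -3) -> M' = m ->
  (10 + M') / 3 <= `|r1| + `|r2| + `|r3| + `|r4|.
Proof. by move=> H hc ->; apply: L4 H hc. Qed.

Ltac solve4 H hD :=
  first [ exfalso; move/eqP: hD; apply; ring
        | apply: (L4' H); [ first [ left; split; [ring | split; lra]
                                  | right; split; [ring | split; ring] ]
                          | ring ] ].

Lemma small4_core (b01 b02 b03 b12 b13 b23 : bool) (r1 r2 r3 r4 : algR) :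
  (forall x, (x - r1) * (x - r2) * (x - r3) * (x - r4) =
     x ^+ 4 - (bR algR b01 ^+ 2 + bR algR b02 ^+ 2 + bR algR b03 ^+ 2 + bR algR b12 ^+ 2
               + bR algR b13 ^+ 2 + bR algR b23 ^+ 2) * x ^+ 2
  - 2 * (bR algR b01 * bR algR b02 * bR algR b12 + bR algR b01 * bR algR b03 * bR algR b13
         + bR algR b02 * bR algR b03 * bR algR b23 + bR algR b12 * bR algR b13 * bR algR b23) * x
  + ((bR algR b01 * bR algR b23) ^+ 2 + (bR algR b02 * bR algR b13) ^+ 2 + (bR algR b03 * bR algR b12) ^+ 2
     - 2 * (bR algR b01 * bR algR b23 * (bR algR b02 * bR algR b13)
            + bR algR b01 * bR algR b23 * (bR algR b03 * bR algR b12)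
            + bR algR b02 * bR algR b13 * (bR algR b03 * bR algR b12)))) ->
  ((bR algR b01 * bR algR b23) ^+ 2 + (bR algR b02 * bR algR b13) ^+ 2 + (bR algR b03 * bR algR b12) ^+ 2
     - 2 * (bR algR b01 * bR algR b23 * (bR algR b02 * bR algR b13)
            + bR algR b01 * bR algR b23 * (bR algR b03 * bR algR b12)
            + bR algR b02 * bR algR b13 * (bR algR b03 * bR algR b12))) != 0 ->
  (10 + (bR algR b01 + bR algR b02 + bR algR b03 + bR algR b12 + bR algR b13 + bR algR b23)) / 3
    <= `|r1| + `|r2| + `|r3| + `|r4|.
Proof.
move=> H hD.
case: b01 H hD; case: b02; case: b03; case: b12; case: b13; case: b23;
  rewrite /bR /= => H hD; solve4 H hD.
Qed.

Lemma L3' (R : realFieldType) (r1 r2 r3 m d : R) :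
  (forall x, (x - r1) * (x - r2) * (x - r3) = x ^+ 3 - m * x - 2 * d) ->
  m = 3 -> d = 1 -> 11 / 3 <= `|r1| + `|r2| + `|r3|.
Proof.
move=> H hm hd; apply: L3 => x; rewrite H hm hd; ring.
Qed.

Lemma small3_core (b01 b02 b12 : bool) (r1 r2 r3 : algR) :
  (forall x, (x - r1) * (x - r2) * (x - r3) =
     x ^+ 3 - (bR algR b01 ^+ 2 + bR algR b02 ^+ 2 + bR algR b12 ^+ 2) * x
     - 2 * (bR algR b01 * bR algR b02 * bR algR b12)) ->
  bR algR b01 * bR algR b02 * bR algR b12 != 0 ->
  [/\ b01, b02 & b12] /\ 11 / 3 <= `|r1| + `|r2| + `|r3|.
Proof.
move=> H hD.
case: b01 H hD; case: b02; case: b12; rewrite /bR /= => H hD;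
  first [ exfalso; move/eqP: hD; apply; ring
        | split; [by [] | apply: (L3' H); ring] ].
Qed.

Lemma small2_core (b01 : bool) (r1 r2 : algR) :
  (forall x, (x - r1) * (x - r2) = x ^+ 2 - bR algR b01 ^+ 2) ->
  bR algR b01 ^+ 2 != 0 ->
  b01 /\ 2 <= `|r1| + `|r2|.
Proof.
move=> H hD.
case: b01 H hD; rewrite /bR /= => H hD.
  split=> //; apply: L2 => x; rewrite H; ring.
by exfalso; move/eqP: hD; apply; ring.
Qed.


Lemma energy_real n (e : rel 'I_n) : energy e \is Creal.
Proof. by rewrite energyE; apply: rpred_sum => z _; apply: normr_real. Qed.

Definition enR n (e : rel 'I_n) : algR := in_algR (energy_real e).

Lemma lift_real (s : seq algC) : all (fun z => z \is Creal) s ->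
  exists rs : seq algR, map val rs = s.
Proof.
elim: s => [|z s IH] /=; first by exists [::].
move=> /andP [zR /IH [rs hrs]]; exists (in_algR zR :: rs) => /=.
by rewrite hrs.
Qed.

Lemma eig_setup n (e : rel 'I_n) : symmetric e ->
  exists rs : seq algR,
  [/\ size rs = n,
      char_poly (adjmx e) = \prod_(z <- map val rs) ('X - z%:P) &
      enR e = \sum_(r <- rs) `|r|].
Proof.
move=> sym.
have hp := eigs_monic (char_poly_monic (adjmx e)).
have hreal : all (fun z => z \is Creal) (eigs (char_poly (adjmx e))).
  apply/allP => z hz; apply: (adj_eig_real sym).
  by rewrite hp root_prod_XsubC.
have [rs hrs] := lift_real hreal.
exists rs; split.
- have := size_char_poly (adjmx e); rewrite hp size_prod_XsubC -hrs size_map.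
  by case.
- by rewrite hrs.
apply: val_inj; rewrite /= energyE -hrs big_map.
by rewrite (big_morph val (@rmorphD _ _ _) (@rmorph0 _ _ _)).
Qed.

Lemma val_bR b : val (bR algR b) = bR algC b.
Proof. by rewrite /bR rmorph_nat. Qed.

Lemma det_at0 n (A : 'M[algC]_n) : \det (0%:M - A) = (-1) ^+ n * \det A.
Proof. by rewrite raddf0 sub0r -scaleN1r detZ. Qed.

Lemma small4 (e : rel 'I_4) : simple_graph e -> \det (adjmx e) != 0 ->
  InvB 4 (oe e) (enR e).
Proof.
move=> [sym irr] hd.
have [rs [hsz hp hE]] := eig_setup sym.
case: rs hsz hp hE => [|r1 [|r2 [|r3 [|r4 [|? ?]]]]] //= _ hp hE.
have key x : (x - val r1) * (x - val r2) * (x - val r3) * (x - val r4) =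
             \det (x%:M - adjmx e).
  rewrite -horner_char hp !big_cons big_nil mulr1 !hornerM !hornerXsubC.
  by rewrite !mulrA.
have H : forall x : algR, (x - r1) * (x - r2) * (x - r3) * (x - r4) =
     x ^+ 4 - (bR algR (e (inord 0) (inord 1)) ^+ 2 + bR algR (e (inord 0) (inord 2)) ^+ 2
      + bR algR (e (inord 0) (inord 3)) ^+ 2 + bR algR (e (inord 1) (inord 2)) ^+ 2
      + bR algR (e (inord 1) (inord 3)) ^+ 2 + bR algR (e (inord 2) (inord 3)) ^+ 2) * x ^+ 2
  - 2 * (bR algR (e (inord 0) (inord 1)) * bR algR (e (inord 0) (inord 2)) * bR algR (e (inord 1) (inord 2))
       + bR algR (e (inord 0) (inord 1)) * bR algR (e (inord 0) (inord 3)) * bR algR (e (inord 1) (inord 3))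
       + bR algR (e (inord 0) (inord 2)) * bR algR (e (inord 0) (inord 3)) * bR algR (e (inord 2) (inord 3))
       + bR algR (e (inord 1) (inord 2)) * bR algR (e (inord 1) (inord 3)) * bR algR (e (inord 2) (inord 3))) * x
  + ((bR algR (e (inord 0) (inord 1)) * bR algR (e (inord 2) (inord 3))) ^+ 2
     + (bR algR (e (inord 0) (inord 2)) * bR algR (e (inord 1) (inord 3))) ^+ 2
     + (bR algR (e (inord 0) (inord 3)) * bR algR (e (inord 1) (inord 2))) ^+ 2
     - 2 * (bR algR (e (inord 0) (inord 1)) * bR algR (e (inord 2) (inord 3))
              * (bR algR (e (inord 0) (inord 2)) * bR algR (e (inord 1) (inord 3)))
            + bR algR (e (inord 0) (inord 1)) * bR algR (e (inord 2) (inord 3))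
              * (bR algR (e (inord 0) (inord 3)) * bR algR (e (inord 1) (inord 2)))
            + bR algR (e (inord 0) (inord 2)) * bR algR (e (inord 1) (inord 3))
              * (bR algR (e (inord 0) (inord 3)) * bR algR (e (inord 1) (inord 2))))).
  move=> x; apply: val_inj.
  rewrite /= !(rmorphM, rmorphB, rmorphD, rmorphXn, rmorphN, rmorph_nat, val_bR) /=.
  rewrite key (cp4 _ sym irr) /=.
  ring.
have hc := small4_core H.
have hprod : r1 * r2 * r3 * r4 != 0.
  apply: contra hd => /eqP h.
  have := key 0; rewrite det_at0 -signr_odd /= expr0 mul1r => <-.
  have -> : (0 - val r1) * (0 - val r2) * (0 - val r3) * (0 - val r4) =
            val (r1 * r2 * r3 * r4) by rewrite !rmorphM /=; ring.
  by rewrite h rmorph0.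
lazymatch type of hc with is_true (negb (@eq_op _ ?D _)) -> _ =>
  have hD : D != 0 by
    have h0 := H 0; rewrite (_ : D = r1 * r2 * r3 * r4) //; lra
end.
have hc' := hc hD.
have hoe : (oe e)%:R = 2 * (bR algR (e (inord 0) (inord 1)) + bR algR (e (inord 0) (inord 2))
      + bR algR (e (inord 0) (inord 3)) + bR algR (e (inord 1) (inord 2))
      + bR algR (e (inord 1) (inord 3)) + bR algR (e (inord 2) (inord 3))) :> algR.
  rewrite /oe natr_sum.
  rewrite (eq_bigr (fun i : 'I_4 => \sum_(j < 4) bR algR (e (inord i) (inord j)))); last first.
    by move=> i _; rewrite natr_sum; apply: eq_bigr => j _; rewrite !inord_val.
  rewrite !big_ord_recr !big_ord0 /= ?(addSn, add0n).
  rewrite (sym (inord 1) (inord 0)) (sym (inord 2) (inord 0)) (sym (inord 3) (inord 0)).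
  rewrite (sym (inord 2) (inord 1)) (sym (inord 3) (inord 1)) (sym (inord 3) (inord 2)).
  rewrite !irr /bR /=; ring.
rewrite /InvB /= hE hoe !big_cons big_nil addr0.
move: hc'; rewrite !addrA; lra.
Qed.

Lemma small3 (e : rel 'I_3) : simple_graph e -> \det (adjmx e) != 0 ->
  InvB 3 (oe e) (enR e).
Proof.
move=> [sym irr] hd.
have [rs [hsz hp hE]] := eig_setup sym.
case: rs hsz hp hE => [|r1 [|r2 [|r3 [|? ?]]]] //= _ hp hE.
have key x : (x - val r1) * (x - val r2) * (x - val r3) = \det (x%:M - adjmx e).
  rewrite -horner_char hp !big_cons big_nil mulr1 !hornerM !hornerXsubC.
  by rewrite !mulrA.
have H : forall x : algR, (x - r1) * (x - r2) * (x - r3) =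
     x ^+ 3 - (bR algR (e (inord 0) (inord 1)) ^+ 2 + bR algR (e (inord 0) (inord 2)) ^+ 2
      + bR algR (e (inord 1) (inord 2)) ^+ 2) * x
     - 2 * (bR algR (e (inord 0) (inord 1)) * bR algR (e (inord 0) (inord 2))
            * bR algR (e (inord 1) (inord 2))).
  move=> x; apply: val_inj.
  rewrite /= !(rmorphM, rmorphB, rmorphD, rmorphXn, rmorphN, rmorph_nat, val_bR) /=.
  rewrite key (cp3 _ sym irr) /=.
  ring.
have hc := small3_core H.
have hprod : r1 * r2 * r3 != 0.
  apply: contra hd => /eqP h.
  have := key 0; rewrite det_at0 -signr_odd /= expr1 mulN1r => h0.
  rewrite -oppr_eq0 -h0.
  have -> : (0 - val r1) * (0 - val r2) * (0 - val r3) =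
            - val (r1 * r2 * r3) by rewrite !rmorphM /=; ring.
  by rewrite h rmorph0 oppr0.
lazymatch type of hc with is_true (negb (@eq_op _ ?D _)) -> _ =>
  have hD : D != 0 by
    have h0 := H 0; rewrite (_ : D = r1 * r2 * r3 / 2);
      [rewrite mulf_neq0 // invr_eq0; apply/eqP; lra | lra]
end.
have [[h01 h02 h12] hc'] := hc hD.
have hoe : oe e = 6%N.
  rewrite /oe.
  rewrite (eq_bigr (fun i : 'I_3 => \sum_(j < 3) nat_of_bool (e (inord i) (inord j)))); last first.
    by move=> i _; apply: eq_bigr => j _; rewrite !inord_val.
  rewrite !big_ord_recr !big_ord0 /= ?(addSn, add0n).
  rewrite (sym (inord 1) (inord 0)) (sym (inord 2) (inord 0)) (sym (inord 2) (inord 1)).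
  by rewrite !irr h01 h02 h12.
rewrite /InvB /= hE hoe !big_cons big_nil addr0.
move: hc'; rewrite !addrA; lra.
Qed.

Lemma small2 (e : rel 'I_2) : simple_graph e -> \det (adjmx e) != 0 ->
  InvB 2 (oe e) (enR e).
Proof.
move=> [sym irr] hd.
have [rs [hsz hp hE]] := eig_setup sym.
case: rs hsz hp hE => [|r1 [|r2 [|? ?]]] //= _ hp hE.
have key x : (x - val r1) * (x - val r2) = \det (x%:M - adjmx e).
  rewrite -horner_char hp !big_cons big_nil mulr1 !hornerM !hornerXsubC.
  by rewrite ?mulrA.
have H : forall x : algR, (x - r1) * (x - r2) =
     x ^+ 2 - bR algR (e (inord 0) (inord 1)) ^+ 2.
  move=> x; apply: val_inj.
  rewrite /= !(rmorphM, rmorphB, rmorphD, rmorphXn, rmorphN, rmorph_nat, val_bR) /=.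
  rewrite key (cp2 _ sym irr) /=.
  ring.
have hc := small2_core H.
have hprod : r1 * r2 != 0.
  apply: contra hd => /eqP h.
  have := key 0; rewrite det_at0 -signr_odd /= expr0 mul1r => <-.
  have -> : (0 - val r1) * (0 - val r2) = val (r1 * r2) by rewrite !rmorphM /=; ring.
  by rewrite h rmorph0.
lazymatch type of hc with is_true (negb (@eq_op _ ?D _)) -> _ =>
  have hD : D != 0 by
    have h0 := H 0; rewrite (_ : D = - (r1 * r2)); [rewrite oppr_eq0 // | lra]
end.
have [h01 hc'] := hc hD.
have hoe : oe e = 2%N.
  rewrite /oe.
  rewrite (eq_bigr (fun i : 'I_2 => \sum_(j < 2) nat_of_bool (e (inord i) (inord j)))); last first.
    by move=> i _; apply: eq_bigr => j _; rewrite !inord_val.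
  rewrite !big_ord_recr !big_ord0 /= ?(addSn, add0n).
  rewrite (sym (inord 1) (inord 0)).
  by rewrite !irr h01.
rewrite /InvB /= hE hoe !big_cons big_nil addr0.
move: hc'; lra.
Qed.


Lemma InvB_big n (e : rel 'I_n) : (5 <= n)%N -> simple_graph e ->
  InvB n (oe e) (enR e) <-> (n.-1)%:R + avgdeg e <= energy e.
Proof.
move=> h5 hs; rewrite /InvB h5 /avgdeg (handshake hs).
have -> : (n.-1)%:R + (oe e)%:R / n%:R <= enR e =
          (val ((n.-1)%:R + (oe e)%:R / n%:R : algR) <= val (enR e)) by [].
rewrite rmorphD fmorph_div !rmorph_nat. done.
Qed.

Lemma oe_ord1 (e : rel 'I_1) : irreflexive e -> oe e = 0%N.
Proof. by move=> irr; rewrite /oe !big_ord1 irr. Qed.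

Lemma main_inv :
  (forall (n : nat) (e : rel 'I_n), (5 <= n)%N -> simple_graph e ->
     connected_graph e -> \det (adjmx e) != 0 ->
     (n.-1)%:R + avgdeg e <= energy e) ->
  forall N n (e : rel 'I_n), (n < N)%N -> (2 <= n)%N -> simple_graph e ->
    \det (adjmx e) != 0 -> InvB n (oe e) (enR e).
Proof.
move=> hyp; elim=> [//|N IH] n e hnN h2 hs hd.
case: (leqP n 4) => h4.
  case: n e hnN h2 hs hd h4 => [|[|[|[|[|n]]]]] e //= _ _ hs hd _.
  - exact: small2.
  - exact: small3.
  - exact: small4.
case: (boolP [forall x, [forall y, connect e x y]]) => hc.
  apply/(InvB_big h4 hs); apply: hyp => //.
  by move=> x y; move/forallP: hc => /(_ x) /forallP /(_ y).
move: hc; rewrite negb_forall => /existsP [x]; rewrite negb_forall => /existsP [y hxy].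
have [n1 [n2 [e1 [e2 [[hN hn1 hn2 hs1 hs2] [hcp hdet hoe]]]]]] := split_graph hs hxy.
have hd1 : \det (adjmx e1) != 0 by move: hd; rewrite hdet mulf_eq0 negb_or => /andP [].
have hd2 : \det (adjmx e2) != 0 by move: hd; rewrite hdet mulf_eq0 negb_or => /andP [].
have h21 : (2 <= n1)%N.
  case: n1 e1 hn1 hs1 hd1 {hcp hdet hoe} hN => [|[|n1]] e1 // _ hs1 hd1 _.
  by have := n_le_oe hd1; rewrite oe_ord1 //; case: hs1.
have h22 : (2 <= n2)%N.
  case: n2 e2 hn2 hs2 hd2 {hcp hdet hoe} hN => [|[|n2]] e2 // _ hs2 hd2 _.
  by have := n_le_oe hd2; rewrite oe_ord1 //; case: hs2.
have I1 := IH n1 e1 ltac:(lia) h21 hs1 hd1.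
have I2 := IH n2 e2 ltac:(lia) h22 hs2 hd2.
have U := union_inv h21 h22 (n_le_oe hd1) (n_le_oe hd2) I1 I2.
have hE : enR e = enR e1 + enR e2.
  apply: val_inj; rewrite /= ?rmorphD /= !energyE hcp.
  by rewrite Esum_mul ?char_poly_monic.
rewrite hoe hE -hN; exact: U.
Qed.


Unset Implicit Arguments.

Theorem theorem3p6 :
  (forall (n : nat) (e : rel 'I_n), (5 <= n)%N -> simple_graph e ->
     connected_graph e -> \det (adjmx e) != 0 ->
     (n.-1)%:R + avgdeg e <= energy e) ->
  forall (n : nat) (e : rel 'I_n), (5 <= n)%N -> simple_graph e ->
     \det (adjmx e) != 0 ->
     (n.-1)%:R + avgdeg e <= energy e.
Proof.
move=> hyp n e h5 hs hd.
apply/(InvB_big h5 hs).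
apply: (main_inv hyp (N := n.+1)) => //.
lia.
Qed.
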